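(* Let $P=\langle(\mathcal Q,\le),N\rangle$ be a possibilistic normal program such that $(\mathcal Q,\le)$ is a totally ordered set and the language of $P$ has no extended (strongly negated) atoms. Then $M$ is a possibilistic answer set of $P$ if and only if $M$ is a possibilistic stable model of $P$.
   Context: $(\mathcal Q,\le)$ is a finite (here totally ordered) lattice with top $\top_{\mathcal Q}$. A possibilistic normal program is $P=\langle(\mathcal Q,\le),N\rangle$ where $N$ is a finite set of clauses $r=\alpha:a\leftarrow\mathcal B^+,not\ \mathcal B^-$ with exactly one head atom $a$, $\alpha\in\mathcal Q$; $n(r)=\alpha$, $r^*$ the underlying clause, $P^*=\{r^*\}$. Answer sets of $P^*$ are Gelfond–Lifschitz answer sets. $\mathcal{PS}$: sets of pairs (atom, element of $\mathcal Q$) with each atom at most once; $M^*$ its atoms; $A\sqsubseteq B$ iff $A^*\subseteq B^*$ and $\gamma\le\delta$ whenever $(x,\gamma)\in A,(x,\delta)\in B$. Reduct $P_M=\{n(r):(\{a\}\cap M)\leftarrow\mathcal B^+\mid r\in N, a\in M,\mathcal B^-\cap M=\emptyset,\mathcal B^+\subseteq M\}$. $\vdash_{PL}$ is necessity-valued possibilistic-logic inference (clauses read as weighted implications; classical axioms weighted $\top_{\mathcal Q}$; rules $(\varphi\ \gamma),(\varphi\to\psi\ \delta)\vdash(\psi\ \min\{\gamma,\delta\})$ and weakening $(\varphi\ \gamma)\vdash(\varphi\ \epsilon)$ for $\epsilon\le\gamma$). $P\Vvdash_{PL}M$ iff $M^*$ is an answer set of $P^*$ and $P_{M^*}\vdash_{PL}(a\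 \gamma)$ for all $(a,\gamma)\in M$. $M$ is a possibilistic answer set iff $M^*$ is an answer set of $P^*$, $P\Vvdash_{PL}M$, and there is no $M''\ne M$ in $\mathcal{PS}$ with $M\sqsubseteq M''$ and $P\Vvdash_{PL}M''$. Possibilistic stable models (Nicolas et al.): for a set of atoms $S$, the reduct $P^S=\{n(r):a\leftarrow\mathcal B^+\mid r\in N,\ \mathcal B^-\cap S=\emptyset\}$; for a definite possibilistic program $D$ and $A\in\mathcal{PS}$, $T_D(A)$ assigns to each atom $a$ that is the head of some $r\in D$ with $\mathcal B^+(r)\subseteq A^*$ the value $\max$ over such $r$ of $\min(\{n(r)\}\cup\{\beta:(b,\beta)\in A,b\in\mathcal B^+(r)\})$; $Cn(D)$ is the least fixpoint of $T_D$ obtained by iterating from $\emptyset$. $M$ is a possibilistic stable model of $P$ iff $M=Cn(P^{M^*})$. *)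

(* Defs.v *)
From HB Require Import structures.
From mathcomp Require Import all_boot all_order.
Set Implicit Arguments. Unset Strict Implicit. Unset Printing Implicit Defensive.
Import Order.TTheory.
Local Open Scope order_scope.

Section Possibilistic.
Variables (d : Order.disp_t) (Q : finTBOrderType d) (A : finType).

Record clause := Clause { head : A; weight : Q; pos : {set A}; neg : {set A} }.

Record dclause := DClause { dhead : A; dweight : Q; dpos : {set A} }.

(* Elements of PS: partial maps atom -> Q (each atom at most once). *)
Definition pset := {ffun A -> option Q}.
Definition ps_empty : pset := [ffun _ => None].
Definition atoms (M : pset) : {set A} := [set a | M a != None].

Definition ps_le (M1 M2 : pset) : Prop :=
  atoms M1 \subset atoms M2 /\
  forall x g e, M1 x = Some g -> M2 x = Some e -> g <= e.

Definition gl_reduct (N : seq clause) (S : {set A}) : seq (A * {set A}) :=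
  [seq (head r, pos r) | r <- N & [disjoint neg r & S]].

Definition def_model (R : seq (A * {set A})) (S : {set A}) : Prop :=
  forall r, r \in R -> r.2 \subset S -> r.1 \in S.

Definition answer_set (N : seq clause) (S : {set A}) : Prop :=
  def_model (gl_reduct N S) S /\
  forall S', def_model (gl_reduct N S) S' -> S \subset S'.

Inductive formula :=
| FVar of A
| FBot
| FImp of formula & formula
| FAnd of formula & formula.

Definition FTop := FImp FBot FBot.

Fixpoint formula_code (f : formula) : GenTree.tree A :=
  match f with
  | FVar a => GenTree.Leaf a
  | FBot => GenTree.Node 0 [::]
  | FImp f g => GenTree.Node 1 [:: formula_code f; formula_code g]
  | FAnd f g => GenTree.Node 2 [:: formula_code f; formula_code g]
  end.
Fixpoint formula_decode (t : GenTree.tree A) : option formula :=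
  match t with
  | GenTree.Leaf a => Some (FVar a)
  | GenTree.Node 0 [::] => Some FBot
  | GenTree.Node 1 [:: t1; t2] =>
      if (formula_decode t1, formula_decode t2) is (Some f, Some g)
      then Some (FImp f g) else None
  | GenTree.Node 2 [:: t1; t2] =>
      if (formula_decode t1, formula_decode t2) is (Some f, Some g)
      then Some (FAnd f g) else None
  | _ => None
  end.
Lemma formula_codeK : pcancel formula_code formula_decode.
Proof. by elim=> //= [f -> g ->|f -> g ->]. Qed.
HB.instance Definition _ := Countable.copy formula (pcan_type formula_codeK).

Fixpoint feval (v : A -> bool) (f : formula) : bool :=
  match f with
  | FVar a => v a
  | FBot => false
  | FImp f g => feval v f ==> feval v g
  | FAnd f g => feval v f && feval v g
  end.

(* classical (propositional) axioms = tautologies *)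
Definition tautology (f : formula) : Prop := forall v, feval v f.

Inductive pl_der (K : seq (formula * Q)) : formula -> Q -> Prop :=
| pl_hyp f a : (f, a) \in K -> pl_der K f a
| pl_ax f : tautology f -> pl_der K f \top
| pl_mp f g a b : pl_der K f a -> pl_der K (FImp f g) b ->
    pl_der K g (Order.min a b)
| pl_weak f a b : pl_der K f a -> b <= a -> pl_der K f b.

Definition dclause_formula (r : dclause) : formula * Q :=
  (FImp (foldr FAnd FTop [seq FVar b | b <- enum (dpos r)]) (FVar (dhead r)),
   dweight r).

Definition reduct_M (N : seq clause) (M : {set A}) : seq dclause :=
  [seq DClause (head r) (weight r) (pos r) |
     r <- N & [&& head r \in M, [disjoint neg r & M] & pos r \subset M]].

Definition pl_entails (N : seq clause) (M : pset) : Prop :=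
  answer_set N (atoms M) /\
  forall a g, M a = Some g ->
    pl_der [seq dclause_formula r | r <- reduct_M N (atoms M)] (FVar a) g.

Definition poss_answer_set (N : seq clause) (M : pset) : Prop :=
  answer_set N (atoms M) /\ pl_entails N M /\
  ~ (exists M'', M'' <> M /\ ps_le M M'' /\ pl_entails N M'').

Definition reduct_S (N : seq clause) (S : {set A}) : seq dclause :=
  [seq DClause (head r) (weight r) (pos r) | r <- N & [disjoint neg r & S]].

Definition T_op (D : seq dclause) (M : pset) : pset :=
  [ffun a =>
     if has (fun r => (dhead r == a) && (dpos r \subset atoms M)) D then
       Some (\big[Order.max/(\bot : Q)]_(r <- D | (dhead r == a) && (dpos r \subset atoms M))
               (\big[Order.min/(dweight r)]_(b in dpos r) odflt \top (M b)))
     else None].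

Definition is_Cn (D : seq dclause) (M : pset) : Prop :=
  (exists n, M = iter n (T_op D) ps_empty) /\ T_op D M = M.

Definition poss_stable_model (N : seq clause) (M : pset) : Prop :=
  is_Cn (reduct_S N (atoms M)) M.

End Possibilistic.

(* Main.v *)
Require Import Defs.
From mathcomp Require Import all_boot all_order.
Set Implicit Arguments. Unset Strict Implicit. Unset Printing Implicit Defensive.
Import Order.TTheory.
From Stdlib Require List.
Notation In := List.In.
Local Open Scope order_scope.

Section Proof.
Variables (d : Order.disp_t) (Q : finTBOrderType d) (A : finType).
Variable N : seq (clause Q A).

Lemma ps_le_refl (M : pset Q A) : ps_le M M.
Proof. by split=> // x g e -> [->]. Qed.

Lemma ps_le_trans (M1 M2 M3 : pset Q A) : ps_le M1 M2 -> ps_le M2 M3 -> ps_le M1 M3.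
Proof.
move=> [s12 l12] [s23 l23]; split; first exact: subset_trans s23.
move=> x g e h1 h3.
have : x \in atoms M2 by apply: (subsetP s12); rewrite inE h1.
rewrite inE; case h2: (M2 x) => [f|] // _.
exact: le_trans (l12 _ _ _ h1 h2) (l23 _ _ _ h2 h3).
Qed.

Lemma ps_le_anti (M1 M2 : pset Q A) : ps_le M1 M2 -> ps_le M2 M1 -> M1 = M2.
Proof.
move=> [s12 l12] [s21 l21]; apply/ffunP=> x.
case h1: (M1 x) => [g|]; case h2: (M2 x) => [e|] //.
- by rewrite (@le_anti _ _ g e) ?(l12 _ _ _ h1 h2) ?(l21 _ _ _ h2 h1).
- by have := subsetP s12 x; rewrite !inE h1 h2 => /(_ isT).
- by have := subsetP s21 x; rewrite !inE h1 h2 => /(_ isT).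
Qed.

Lemma bigmax_attained (I : Type) (r : seq I) (P : pred I) (F : I -> Q) :
  has P r -> exists i, [/\ In i r, P i & \big[Order.max/(\bot : Q)]_(j <- r | P j) F j = F i].
Proof.
elim: r => //= h t IH; rewrite big_cons.
case Ph: (P h) => /=.
  case Ht: (has P t).
    have [i [it Pi ->]] := IH Ht.
    case: (leP (F h) (F i)) => _.
      by exists i; split => //; right.
    by exists h; split => //; left.
  rewrite big_hasC ?Ht //; exists h; split => //; first by left.
  by apply/max_idPl; exact: le0x.
move=> Ht; have [i [it Pi ->]] := IH Ht.
by exists i; split => //; right.
Qed.

Lemma bigmax_ub (I : Type) (r : seq I) (P : pred I) (F : I -> Q) i x :
  In i r -> P i -> x <= F i -> x <= \big[Order.max/(\bot : Q)]_(j <- r | P j) F j.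
Proof.
elim: r => //= h t IH [<-|it] Pi le; rewrite big_cons.
  by rewrite Pi le_max le.
case: ifP => _; last exact: IH.
by rewrite le_max IH ?orbT.
Qed.

Lemma bigmax_lub (I : Type) (r : seq I) (P : pred I) (F : I -> Q) x :
  (forall i, In i r -> P i -> F i <= x) -> \big[Order.max/(\bot : Q)]_(j <- r | P j) F j <= x.
Proof.
elim: r => /= [|h t IH] H; rewrite ?big_nil ?big_cons; first exact: le0x.
have IH' : \big[Order.max/(\bot : Q)]_(j <- t | P j) F j <= x by apply: IH => i it; apply: H; right.
case: ifP => Ph //; by rewrite ge_max IH' H //; left.
Qed.

Lemma sub_atoms_some (M : pset Q A) (s : {set A}) b :
  s \subset atoms M -> b \in s -> exists g, M b = Some g.
Proof.
move=> /subsetP H /H; rewrite inE; case: (M b) => [g|] // _; by exists g.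
Qed.

Lemma T_mono (D : seq (dclause Q A)) (M1 M2 : pset Q A) :
  ps_le M1 M2 -> ps_le (T_op D M1) (T_op D M2).
Proof.
move=> [s12 l12]; split.
  apply/subsetP => a; rewrite !inE !ffunE.
  case: ifP => // h1 _; suff -> : has (fun r => (dhead r == a) && (dpos r \subset atoms M2)) D by [].
  apply: sub_has h1 => r /andP[-> /subset_trans]; exact.
move=> a g e; rewrite !ffunE; case: ifP => h1 // [<-]; case: ifP => h2 // [<-].
apply: bigmax_lub => r rD /andP[ha hp].
apply: (bigmax_ub rD); rewrite ?ha ?(subset_trans hp s12) //.
apply: le_bigmin; first exact: bigmin_le_id.
move=> b bp; apply: le_trans (bigmin_le_cond _ _ bp) _.
have [g1 e1] := sub_atoms_some hp bp.
have [g2 e2] := sub_atoms_some (subset_trans hp s12) bp.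
by rewrite e1 e2 /=; exact: l12 e1 e2.
Qed.


Definition it (D : seq (dclause Q A)) n := iter n (T_op D) (ps_empty Q A).

Lemma atoms_empty : atoms (ps_empty Q A) = set0.
Proof. by apply/setP => x; rewrite !inE ffunE. Qed.

Lemma ps_empty_le (M : pset Q A) : ps_le (ps_empty Q A) M.
Proof. by split; [rewrite atoms_empty sub0set | move=> x g e; rewrite ffunE]. Qed.

Lemma it_chain D n : ps_le (it D n) (it D n.+1).
Proof.
elim: n => [|n IH]; first exact: ps_empty_le.
by rewrite /it iterS [X in ps_le _ X]iterS; apply: T_mono.
Qed.

Lemma it_mono D m n : (m <= n)%N -> ps_le (it D m) (it D n).
Proof.
move=> /subnK <-; elim: (n - m)%N => [|k IH]; first exact: ps_le_refl.
by rewrite addSn; apply: ps_le_trans IH (it_chain _ _).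
Qed.

Lemma it_le_fix D C n : T_op D C = C -> ps_le (it D n) C.
Proof.
move=> fC; elim: n => [|n IH]; first exact: ps_empty_le.
by rewrite /it iterS -fC; apply: T_mono.
Qed.

Lemma exists_fix D : exists n, T_op D (it D n) = it D n.
Proof.
pose f := fun i : 'I_(#|{: pset Q A}|.+1) => it D i.
have : ~~ injectiveb f.
  apply/negP => /injectiveP /leq_card; rewrite card_ord; by rewrite ltnn.
move=> /injectivePn [i [j ij fij]].
have key : forall i j : 'I_(#|{: pset Q A}|.+1), (i < j)%N -> f i = f j ->
   T_op D (it D i) = it D i.
  move=> i' j' lt e;
  apply: ps_le_anti; last exact: it_chain.
  rewrite /f in e; rewrite -/(iter i'.+1 _ _) -/(it D i'.+1) e.
  exact: it_mono.
case: (ltngtP i j) => [lt|lt|eq].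
- by exists i; apply: key lt fij.
- by exists j; apply: key lt (esym fij).
- by move: ij; rewrite (val_inj eq) eqxx.
Qed.


Lemma inP_In (T : eqType) (x : T) s : x \in s <-> In x s.
Proof.
elim: s => //= y s IH; rewrite inE; split.
  by case/orP => [/eqP ->|/IH]; [left|right].
by case=> [->|/IH ->]; rewrite ?eqxx ?orbT.
Qed.

Lemma In_map_filter (T U : Type) (f : T -> U) (p : pred T) s x :
  In x [seq f y | y <- s & p y] <-> exists y, [/\ In y s, p y & x = f y].
Proof.
elim: s x => /= [|y s IH] x; first by split => // [[y []]].
case: ifP => py /=; split.
- case=> [<-|/IH [z [zs pz ->]]]; first by exists y; split => //; left.
  by exists z; split => //; right.
- case=> z [[<-|zs] pz ->]; first by left.
  by right; apply/IH; exists z.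
- by case/IH => z [zs pz ->]; exists z; split => //; right.
- case=> z [[<-|zs] pz ->]; first by rewrite py in pz.
  by apply/IH; exists z.
Qed.

Lemma has_In (T : Type) (P : pred T) s : has P s -> exists x, In x s /\ P x.
Proof.
elim: s => //= y s IH /orP[Py|/IH [x [xs Px]]]; first by exists y; split => //; left.
by exists x; split => //; right.
Qed.

Lemma In_has (T : Type) (P : pred T) s x : In x s -> P x -> has P s.
Proof. by elim: s => //= y s IH [<- ->|/IH H /H ->]; rewrite ?orbT. Qed.

Lemma atoms_T D (M : pset Q A) a :
  (a \in atoms (T_op D M)) = has (fun r => (dhead r == a) && (dpos r \subset atoms M)) D.
Proof. by rewrite inE ffunE; case: ifP. Qed.

Lemma it_sub_model S S' n :
  def_model (gl_reduct N S) S' -> atoms (it (reduct_S N S) n) \subset S'.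
Proof.
move=> dm; elim: n => [|n IH]; first by rewrite /it /= atoms_empty sub0set.
apply/subsetP => a; rewrite /it iterS atoms_T => /has_In [r [/In_map_filter [c [cN dc ->]]]].
move=> /andP[/eqP <- hp] /=.
have hin : (Defs.head c, pos c) \in gl_reduct N S by apply/inP_In/In_map_filter; exists c.
exact: (dm _ hin (subset_trans hp IH)).
Qed.

Lemma fix_model S (C : pset Q A) :
  T_op (reduct_S N S) C = C -> def_model (gl_reduct N S) (atoms C).
Proof.
move=> fC r /inP_In /In_map_filter [c [cN dc ->]] /= hp.
rewrite -fC atoms_T; apply: (In_has (x := DClause (Defs.head c) (weight c) (pos c))) => /=.
  by apply/In_map_filter; exists c.
by rewrite eqxx hp.
Qed.

Lemma answer_antichain S S' :
  answer_set N S -> answer_set N S' -> S \subset S' -> S = S'.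
Proof.
move=> [dS mS] [dS' mS'] sub; apply/eqP; rewrite eqEsubset sub /=.
apply: mS' => r /inP_In /In_map_filter [c [cN dc ->]] hp.
apply: dS hp; apply/inP_In/In_map_filter; exists c; split => //.
by apply: disjointWr dc.
Qed.


Lemma In_map (T U : Type) (f : T -> U) s x : In x s -> In (f x) (map f s).
Proof. by elim: s => //= y s IH [<-|/IH]; [left|right]. Qed.

Lemma In_map_inv (T U : Type) (f : T -> U) s x : In x (map f s) -> exists y, In y s /\ x = f y.
Proof.
elim: s => //= y s IH [<-|/IH [z [zs ->]]]; first by exists y; split => //; left.
by exists z; split => //; right.
Qed.

Lemma pl_sound (K : seq (formula A * Q)) f g : pl_der K f g ->
  forall v, (forall h w, (h, w) \in K -> g <= w -> feval v h) -> feval v f.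
Proof.
elim=> {f g} [f a fK|f tf|f h a b _ IH1 _ IH2|f a b _ IH le] v H.
- exact: H fK (lexx a).
- exact: tf.
- have ma : Order.min a b <= a by rewrite ge_min lexx.
  have mb : Order.min a b <= b by rewrite ge_min lexx orbT.
  have H1 := IH1 v (fun h w hK le => H h w hK (le_trans ma le)).
  have H2 := IH2 v (fun h w hK le => H h w hK (le_trans mb le)).
  by move: H2 => /= /implyP; apply.
- by apply: IH => h w hK le'; apply: H hK (le_trans le le').
Qed.

Lemma conj_eval (v : A -> bool) (s : seq A) :
  feval v (foldr (@FAnd A) (FTop A) [seq FVar b | b <- s]) = all v s.
Proof. by elim: s => //= b s ->. Qed.

Lemma conj_der (K : seq (formula A * Q)) (s : seq A) g :
  (forall b, b \in s -> pl_der K (FVar b) g) ->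
  pl_der K (foldr (@FAnd A) (FTop A) [seq FVar b | b <- s]) g.
Proof.
elim: s => /= [|b s IH] H.
  apply: (pl_weak (pl_ax K (f := FTop A) (fun v => isT))). exact: lex1.
have Hb := H b (mem_head _ _).
have Hs := IH (fun x xs => H x (mem_behead (s := b :: s) xs)).
set R := foldr _ _ _ in Hs *.
have t : tautology (FImp (FVar b) (FImp R (FAnd (FVar b) R))).
  by move=> v /=; case: (v b); case: (feval v R).
have h1 := pl_mp Hb (pl_ax K t).
have h2 := pl_mp Hs h1.
apply: (pl_weak h2); by rewrite !le_min lexx lex1.
Qed.


Definition KM (S : {set A}) := [seq dclause_formula r | r <- reduct_M N S].

Lemma clause_in_KM (S : {set A}) c : In c N -> Defs.head c \in S -> [disjoint neg c & S] -> pos c \subset S ->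
  dclause_formula (DClause (Defs.head c) (weight c) (pos c)) \in KM S.
Proof.
move=> cN hS dS pS; apply/inP_In.
have H : In (DClause (Defs.head c) (weight c) (pos c)) (reduct_M N S).
  by apply/In_map_filter; exists c; split => //; rewrite hS dS pS.
exact: (In_map (@dclause_formula d Q A) H).
Qed.

Lemma it_derivable S (C : pset Q A) :
  T_op (reduct_S N S) C = C -> atoms C = S ->
  forall n a v, it (reduct_S N S) n a = Some v -> pl_der (KM S) (FVar a) v.
Proof.
move=> fC aC; elim=> [|n IH] a v; first by rewrite /it /= ffunE.
have [sub1 _] := it_le_fix n.+1 fC.
have [sub0 _] := it_le_fix n fC.
rewrite aC in sub1 sub0.
have ainS : it (reduct_S N S) n.+1 a = Some v -> a \in S.
  by move=> e; apply: (subsetP sub1); rewrite inE e.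
move=> e; move: (ainS e) => aS; move: e.
rewrite /it iterS ffunE; case: ifP => // hh [<-].
have [r [rD /andP[/eqP ha hp] ->]] := bigmax_attained (fun r => \big[Order.min/dweight r]_(b in dpos r) odflt \top (iter n (T_op (reduct_S N S)) (ps_empty Q A) b)) hh.
move: rD => /In_map_filter [c [cN dc er]]; subst r; rewrite /= in ha hp *.
subst a.
set F := \big[Order.min/weight c]_(b in pos c) _.
have Fw : F <= weight c by apply: bigmin_le_id.
have Hconj : pl_der (KM S) (foldr (@FAnd A) (FTop A) [seq FVar b | b <- enum (pos c)]) F.
  apply: conj_der => b; rewrite mem_enum => bp.
  have [vb eb] := sub_atoms_some hp bp.
  apply: (pl_weak (IH b vb eb)).
  by rewrite /F; apply: le_trans (bigmin_le_cond _ _ bp) _; rewrite eb.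
have Hcl := pl_hyp (clause_in_KM cN aS dc (subset_trans hp sub0)).
have := pl_mp Hconj Hcl; by rewrite (min_l Fw).
Qed.

Lemma fix_maximal S (C : pset Q A) a g :
  T_op (reduct_S N S) C = C -> pl_der (KM S) (FVar a) g ->
  exists e, C a = Some e /\ g <= e.
Proof.
move=> fC der.
pose v x := if C x is Some e then g <= e else false.
suff Hyp : forall h w, (h, w) \in KM S -> g <= w -> feval v h.
  have := pl_sound der Hyp; rewrite /= /v; case: (C a) => [e|] // ge.
  by exists e.
move=> h w /inP_In; rewrite /KM => /(@In_map_inv _ _ (@dclause_formula d Q A)) [c' [c'in ec]].
move: c'in => /In_map_filter [c [cN /and3P[hS dS pS] ec']]; subst c'.
move: ec; rewrite /dclause_formula /= => -[-> ->] gw.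
rewrite /= conj_eval; apply/implyP => /allP allv.
have posC : pos c \subset atoms C.
  apply/subsetP => b bp; have := allv b; rewrite mem_enum => /(_ bp).
  by rewrite inE /v; case: (C b).
rewrite /= /v -fC ffunE.
have rin : In (DClause (Defs.head c) (weight c) (pos c)) (reduct_S N S).
  by apply/In_map_filter; exists c.
rewrite (In_has (P := fun r => (dhead r == Defs.head c) && (dpos r \subset atoms C)) rin) /=; last by rewrite eqxx posC.
apply: (bigmax_ub rin); first by rewrite /= eqxx posC.
rewrite /=; apply: le_bigmin => // b bp.
have := allv b; rewrite mem_enum => /(_ bp).
by rewrite /v; case: (C b).
Qed.

End Proof.

Theorem proposition5 (d : Order.disp_t) (Q : finTBOrderType d) (A : finType)
  (N : seq (clause Q A)) (M : pset Q A) :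
  poss_answer_set N M <-> poss_stable_model N M.
Proof.
split.
- move=> [AS [[_ der] maxM]].
  set S := atoms M in AS der maxM *.
  have [n fx] := exists_fix (reduct_S N S).
  set C := it (reduct_S N S) n in fx.
  have aC : atoms C = S.
    apply/eqP; rewrite eqEsubset; apply/andP; split.
      exact: it_sub_model AS.1.
    exact: AS.2 _ (fix_model fx).
  have leMC : ps_le M C.
    split; first by rewrite aC subxx.
    move=> x g e Mx Cx.
    have [e' [Ce' ge']] := fix_maximal fx (der x g Mx).
    by rewrite Cx in Ce'; case: Ce' => ->.
  have entC : pl_entails N C.
    split; first by rewrite aC.
    move=> a g Ca; rewrite aC; exact: (it_derivable fx aC Ca).
  case: (eqVneq C M) => [eCM|neq]; last first.
    by exfalso; apply: maxM; exists C; split => //; apply/eqP.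
  rewrite /poss_stable_model /is_Cn -/S -eCM; split => //; by exists n.
- move=> [[n eM] fM].
  set S := atoms M in eM fM *.
  have AS : answer_set N S.
    split; first exact: fix_model fM.
    move=> S' dm; have := it_sub_model n dm; by rewrite /it -eM.
  have ent : pl_entails N M.
    split => // a g Ma; apply: (it_derivable fM erefl (n := n)); by rewrite /it -eM.
  split => //; split => //.
  move=> [M'' [neq [leM [AS'' der'']]]].
  have eqA : atoms M'' = S by symmetry; exact: answer_antichain AS AS'' leM.1.
  apply: neq; apply: ps_le_anti => //.
  split; first by rewrite eqA subxx.
  move=> x g e M''x Mx.
  have := der'' x g M''x; rewrite eqA => dx.
  have [e' [Me' ge']] := fix_maximal fM dx.
  by rewrite Mx in Me'; case: Me' => ->.
Qed.
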